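(* For $b,c\in(-1,\infty)$, with $f$ as defined in the context: (1) if $b=c$, then $f(b,c)=1$; (2) if $b>c$, then $\left(\frac{c+1}{b+1}\right)^2<f(b,c)<1$; (3) if $b<c$, then $1<f(b,c)<\left(\frac{c+1}{b+1}\right)^2$.
   Context: Let $u_n=(-1)^{s_2(n)}$, where $s_2(n)$ is the sum of the binary digits of the non-negative integer $n$ (Thue–Morse sequence with values $\pm1$). For $b,c\in\mathbb C\setminus\{-1,-2,-3,\dots\}$ define $f(b,c)=\prod_{n=1}^\infty\left(\frac{n+b}{n+c}\right)^{u_n}$ (limit of partial products; this converges for all such $b,c$). *)

(* Defs.v *)
From Stdlib Require Import Reals Lra Lia.
From Coquelicot Require Import Coquelicot.
Open Scope R_scope.

Fixpoint bin_digit_sum_aux (fuel n : nat) : nat :=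
  match fuel with
  | O => O
  | S f => match n with
           | O => O
           | _ => (n mod 2 + bin_digit_sum_aux f (n / 2))%nat
           end
  end.
Definition s2 (n : nat) : nat := bin_digit_sum_aux n n.

Definition tm (n : nat) : R := (-1) ^ (s2 n).

(* ((n+b)/(n+c))^{u_n}; since u_n = +-1 this is the ratio or its inverse *)
Definition tm_factor (b c : R) (n : nat) : R :=
  if Nat.even (s2 n) then (INR n + b) / (INR n + c) else (INR n + c) / (INR n + b).

Fixpoint tm_partial (b c : R) (N : nat) : R :=
  match N with
  | O => 1
  | S M => tm_partial b c M * tm_factor b c (S M)
  end.

Definition f_tm (b c : R) : Rbar := Lim_seq (tm_partial b c).

(* Main.v *)
Require Import Defs.
From Stdlib Require Import Reals Lra Lia.
From Coquelicot Require Import Coquelicot.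
Open Scope R_scope.

Lemma aux_fuel : forall f f' n, (n <= f)%nat -> (n <= f')%nat ->
  bin_digit_sum_aux f n = bin_digit_sum_aux f' n.
Proof.
  induction f as [|f IH]; intros f' n H1 H2.
  - assert (n = 0%nat) by lia; subst. destruct f'; reflexivity.
  - destruct f' as [|f']. { assert (n = 0%nat) by lia; subst; reflexivity. }
    destruct n as [|m]; [reflexivity|].
    cbn [bin_digit_sum_aux]. f_equal. apply IH.
    + assert (Nat.div (S m) 2 < S m)%nat by (apply Nat.div_lt; lia). lia.
    + assert (Nat.div (S m) 2 < S m)%nat by (apply Nat.div_lt; lia). lia.
Qed.

Lemma aux_step f n : bin_digit_sum_aux (S f) (S n) =
  (Nat.modulo (S n) 2 + bin_digit_sum_aux f (Nat.div (S n) 2))%nat.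
Proof. reflexivity. Qed.

Lemma s2_double j : s2 (2*j) = s2 j.
Proof.
  unfold s2. destruct j as [|k]; [reflexivity|].
  replace (2 * S k)%nat with (S (S (2*k)))%nat by lia.
  assert (Hd2 : Nat.div (S (S (2*k))) 2 = S k) by (symmetry; apply (Nat.div_unique _ _ _ 0); lia).
  assert (Hm2 : Nat.modulo (S (S (2*k))) 2 = 0%nat) by (symmetry; apply (Nat.mod_unique _ _ (S k)); lia).
  rewrite aux_step, Hd2, Hm2, Nat.add_0_l. apply aux_fuel; lia.
Qed.

Lemma s2_odd j : s2 (S (2*j)) = S (s2 (2*j)).
Proof.
  rewrite s2_double. unfold s2 at 1.
  assert (Hd : Nat.div (S (2*j)) 2 = j) by (symmetry; apply (Nat.div_unique _ _ _ 1); lia).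
  assert (Hm : Nat.modulo (S (2*j)) 2 = 1%nat) by (symmetry; apply (Nat.mod_unique _ _ j); lia).
  rewrite aux_step, Hd, Hm. change (1 + ?x)%nat with (S x). f_equal. unfold s2. apply aux_fuel; lia.
Qed.

Definition sg (n : nat) : R := if Nat.even (s2 n) then 1 else -1.

Lemma sg_pair j : sg (2*j) + sg (S (2*j)) = 0.
Proof.
  unfold sg. rewrite s2_odd, Nat.even_succ, <- Nat.negb_even.
  destruct (Nat.even (s2 (2*j))); simpl; lra.
Qed.

Lemma sg_cases n : sg n = 1 \/ sg n = -1.
Proof. unfold sg; destruct (Nat.even (s2 n)); auto. Qed.

Fixpoint A (N : nat) : R := match N with O => 0 | S M => A M + sg (S M) end.

Lemma A_odd k : A (S (2*k)) = -1.
Proof.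
  induction k as [|k IH].
  - cbn [A]. unfold sg. simpl. lra.
  - replace (S (2 * S k)) with (S (S (S (2*k)))) by lia.
    cbn [A]. cbn [A] in IH. rewrite IH.
    replace (S (S (2*k))) with (2 * S k)%nat by lia.
    pose proof (sg_pair (S k)). lra.
Qed.

Lemma A_bounds n : -2 <= A n <= 0.
Proof.
  destruct (Nat.Even_or_Odd n) as [[k Hk]|[k Hk]]; subst.
  - destruct k as [|k]. { simpl; lra. }
    replace (2 * S k)%nat with (S (S (2*k))) by lia.
    cbn [A]. pose proof (A_odd k) as H. cbn [A] in H. rewrite H.
    destruct (sg_cases (S (S (2*k)))) as [E|E]; rewrite E; lra.
  - replace (2*k+1)%nat with (S (2*k)) by lia. rewrite A_odd. lra.
Qed.

Lemma A_1 : A 1 = -1.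
Proof. apply (A_odd 0). Qed.

Section Main.
Variables b c : R.
Hypothesis hb : -1 < b.
Hypothesis hc : -1 < c.
Hypothesis hbc : c < b.

Definition g (n : nat) : R := ln ((INR n + b) / (INR n + c)).

Fixpoint Ls (N : nat) : R := match N with O => 0 | S M => Ls M + sg (S M) * g (S M) end.
Fixpoint D (N : nat) : R := match N with O => 0 | S M => D M + A (S M) * (g (S M) - g (S (S M))) end.

Lemma INR_ge1 n : (1 <= n)%nat -> 1 <= INR n.
Proof. intro H. apply le_INR in H. simpl in H. exact H. Qed.

Lemma ratio_pos n : (1 <= n)%nat -> 0 < (INR n + b) / (INR n + c).
Proof. intro H. apply INR_ge1 in H. apply Rdiv_lt_0_compat; lra. Qed.

Lemma P_exp N : tm_partial b c N = exp (Ls N).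
Proof.
  induction N as [|N IH].
  - simpl. rewrite exp_0. reflexivity.
  - cbn [tm_partial Ls]. rewrite IH, exp_plus. f_equal.
    unfold tm_factor, sg, g.
    assert (Hp := ratio_pos (S N) ltac:(lia)).
    destruct (Nat.even (s2 (S N))).
    + rewrite Rmult_1_l, exp_ln; auto.
    + replace (-1 * ln ((INR (S N) + b) / (INR (S N) + c))) with
        (- ln ((INR (S N) + b) / (INR (S N) + c))) by ring.
      rewrite exp_Ropp, exp_ln, Rinv_div; auto.
Qed.

Lemma Ls_abel N : Ls N = A N * g (S N) + D N.
Proof.
  induction N as [|N IH].
  - simpl. ring.
  - cbn [Ls A D]. rewrite IH. ring.
Qed.

Lemma g_pos n : (1 <= n)%nat -> 0 < g n.
Proof.
  intro H. apply INR_ge1 in H. unfold g. rewrite <- ln_1. apply ln_increasing; [lra|].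
  apply (Rmult_lt_reg_r (INR n + c)); [lra|]. unfold Rdiv. rewrite Rmult_assoc, Rinv_l; lra.
Qed.

Lemma g_decr n : (1 <= n)%nat -> g (S n) < g n.
Proof.
  intro H. apply INR_ge1 in H. unfold g. rewrite S_INR. apply ln_increasing.
  - apply Rdiv_lt_0_compat; lra.
  - apply (Rmult_lt_reg_r ((INR n + c) * (INR n + 1 + c))).
    + apply Rmult_lt_0_compat; lra.
    + field_simplify; try lra.
Qed.

Lemma g_le n : (1 <= n)%nat -> g n <= (b - c) / (INR n + c).
Proof.
  intro H. assert (Hp := ratio_pos n H). apply INR_ge1 in H. unfold g.
  pose proof (exp_ineq1_le (ln ((INR n + b) / (INR n + c)))) as E.
  rewrite exp_ln in E; auto.
  replace ((b - c) / (INR n + c)) with ((INR n + b) / (INR n + c) - 1) by (field; lra).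
  lra.
Qed.

Lemma g_lim : is_lim_seq (fun n => g (S n)) 0.
Proof.
  apply is_lim_seq_le_le with (u := fun _ => 0) (w := fun n => (b - c) * / (INR (S n) + c)).
  - intro n. split. + left. apply g_pos; lia. + apply g_le; lia.
  - apply is_lim_seq_const.
  - replace (Finite 0) with (Rbar_mult (b - c) (Rbar_inv p_infty)) by (simpl; f_equal; ring).
    apply is_lim_seq_scal_l. apply is_lim_seq_inv; [|discriminate].
    apply (is_lim_seq_incr_1 (fun n => INR n + c)).
    eapply is_lim_seq_plus. apply is_lim_seq_INR. apply is_lim_seq_const. reflexivity.
Qed.

Lemma D_le0 N : D N <= 0.
Proof.
  induction N as [|N IH]; cbn [D]; [lra|].
  pose proof (A_bounds (S N)). pose proof (g_decr (S N) ltac:(lia)).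
  assert (0 <= - A (S N) * (g (S N) - g (S (S N)))) by (apply Rmult_le_pos; lra). lra.
Qed.

Lemma D_upper N : D (S N) <= - (g 1 - g 2).
Proof.
  induction N as [|N IH].
  - cbn [D]. rewrite A_1. lra.
  - cbn [D]. cbn [D] in IH.
    pose proof (A_bounds (S (S N))). pose proof (g_decr (S (S N)) ltac:(lia)).
    assert (0 <= - A (S (S N)) * (g (S (S N)) - g (S (S (S N))))) by (apply Rmult_le_pos; lra). lra.
Qed.

Lemma D_lower N : - (g 1 - g 2) - 2 * (g 2 - g (S (S N))) <= D (S N).
Proof.
  induction N as [|N IH].
  - cbn [D]. rewrite A_1. lra.
  - cbn [D]. cbn [D] in IH.
    pose proof (A_bounds (S (S N))). pose proof (g_decr (S (S N)) ltac:(lia)).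
    assert (0 <= (A (S (S N)) + 2) * (g (S (S N)) - g (S (S (S N))))) by (apply Rmult_le_pos; lra). lra.
Qed.

Definition E (N : nat) : R := D N + 2 * (g 1 - g (S N)).

Lemma D_lim : exists l : R, is_lim_seq D l.
Proof.
  assert (HE : ex_finite_lim_seq E).
  { apply ex_finite_lim_seq_incr with (M := 2 * g 1).
    - intro n. unfold E. cbn [D].
      pose proof (A_bounds (S n)). pose proof (g_decr (S n) ltac:(lia)).
      assert (0 <= (A (S n) + 2) * (g (S n) - g (S (S n)))) by (apply Rmult_le_pos; lra). lra.
    - intro n. unfold E. pose proof (D_le0 n). pose proof (g_pos (S n) ltac:(lia)). lra. }
  destruct HE as [lE HlE].
  exists (lE - 2 * g 1 + 2 * 0).
  apply is_lim_seq_ext with (u := fun n => (E n - 2 * g 1) + 2 * g (S n)).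
  { intro n. unfold E. ring. }
  apply is_lim_seq_plus'.
  - apply is_lim_seq_minus'; auto. apply is_lim_seq_const.
  - pose proof (is_lim_seq_scal_l _ 2 _ g_lim) as H. simpl in H. exact H.
Qed.

Lemma main_gt : exists l : R, is_lim_seq (tm_partial b c) l /\
  ((c + 1) / (b + 1)) ^ 2 < l < 1.
Proof.
  destruct D_lim as [lD HD].
  assert (HL : is_lim_seq Ls lD).
  { apply is_lim_seq_ext with (u := fun n => A n * g (S n) + D n).
    { intro n. symmetry. apply Ls_abel. }
    replace lD with (0 + lD) by ring.
    apply is_lim_seq_plus'; auto.
    apply is_lim_seq_le_le with (u := fun n => -2 * g (S n)) (w := fun _ => 0).
    - intro n. pose proof (A_bounds n). pose proof (g_pos (S n) ltac:(lia)). split; nra.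
    - pose proof (is_lim_seq_scal_l _ (-2) _ g_lim). simpl in H.
      replace (-2 * 0) with 0 in H by ring. exact H.
    - apply is_lim_seq_const. }
  assert (HDS : is_lim_seq (fun n => D (S n)) lD) by (apply (proj1 (is_lim_seq_incr_1 D lD)); exact HD).
  assert (Hup : lD <= - (g 1 - g 2)).
  { pose proof (is_lim_seq_le _ _ _ _ D_upper HDS (is_lim_seq_const (- (g 1 - g 2)))). simpl in H. exact H. }
  assert (Hlo : - (g 1 - g 2) - 2 * g 2 <= lD).
  { refine (is_lim_seq_le (fun _ => - (g 1 - g 2) - 2 * g 2) _ _ _ _ (is_lim_seq_const _) HDS).
    intro n. pose proof (D_lower n). pose proof (g_pos (S (S n)) ltac:(lia)). lra. }
  pose proof (g_decr 1 ltac:(lia)) as H12. pose proof (g_pos 2 ltac:(lia)).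
  exists (exp lD). split.
  - apply is_lim_seq_ext with (u := fun n => exp (Ls n)).
    { intro n. symmetry. apply P_exp. }
    apply is_lim_seq_continuous; auto. apply derivable_continuous_pt, derivable_pt_exp.
  - split.
    + assert (Hx : ((c + 1) / (b + 1)) ^ 2 = exp (- g 1 + - g 1)).
      { rewrite exp_plus, exp_Ropp. unfold g. rewrite exp_ln.
        - simpl INR. field. lra.
        - apply (ratio_pos 1); lia. }
      rewrite Hx. apply exp_increasing. lra.
    + rewrite <- exp_0. apply exp_increasing. lra.
Qed.

End Main.

Lemma partial_eq b (hb : -1 < b) N : tm_partial b b N = 1.
Proof.
  induction N as [|N IH]; [reflexivity|].
  cbn [tm_partial]. rewrite IH. unfold tm_factor.
  assert (1 <= INR (S N)) by (apply (INR_ge1 (S N)); lia).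
  destruct (Nat.even (s2 (S N))); field; lra.
Qed.

Lemma partial_inv b c N : tm_partial b c N = / tm_partial c b N.
Proof.
  induction N as [|N IH]; cbn [tm_partial]. { rewrite Rinv_1; reflexivity. }
  rewrite IH, Rinv_mult. f_equal. unfold tm_factor.
  destruct (Nat.even (s2 (S N))); rewrite Rinv_div; reflexivity.
Qed.

Theorem lemma5 (b c : R) (hb : -1 < b) (hc : -1 < c) :
  ex_finite_lim_seq (tm_partial b c) /\
  (b = c -> f_tm b c = Finite 1) /\
  (b > c -> ((c + 1) / (b + 1)) ^ 2 < real (f_tm b c) < 1) /\
  (b < c -> 1 < real (f_tm b c) < ((c + 1) / (b + 1)) ^ 2).
Proof.
  assert (Hinv : b < c -> exists l : R, is_lim_seq (tm_partial b c) l /\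
            1 < l < ((c + 1) / (b + 1)) ^ 2).
  { intro H. destruct (main_gt c b hc hb H) as [l [Hl [H1 H2]]].
    assert (Hpos : 0 < ((b + 1) / (c + 1)) ^ 2).
    { apply pow_lt. apply Rdiv_lt_0_compat; lra. }
    exists (/ l). split.
    - apply is_lim_seq_ext with (u := fun n => / tm_partial c b n).
      { intro n. symmetry. apply partial_inv. }
      pose proof (is_lim_seq_inv _ _ Hl) as Hi. simpl in Hi. apply Hi.
      intro E. injection E. lra.
    - split.
      + rewrite <- Rinv_1. apply Rinv_lt_contravar; lra.
      + replace (((c + 1) / (b + 1)) ^ 2) with (/ (((b + 1) / (c + 1)) ^ 2)) by (field; lra).
        apply Rinv_lt_contravar; [nra|lra]. }
  destruct (Rtotal_order b c) as [Hbc|[Hbc|Hbc]].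
  - destruct (Hinv Hbc) as [l [Hl Hb]].
    unfold f_tm. rewrite (is_lim_seq_unique _ _ Hl).
    split; [exists l; auto|]. split; [intro; lra|]. split; [intro; lra|]. intros _. simpl. exact Hb.
  - subst c.
    assert (Hl : is_lim_seq (tm_partial b b) 1).
    { apply is_lim_seq_ext with (u := fun _ => 1). { intro n. symmetry. apply partial_eq; auto. }
      apply is_lim_seq_const. }
    unfold f_tm. rewrite (is_lim_seq_unique _ _ Hl).
    split; [exists 1; auto|]. split; [auto|]. split; intro; lra.
  - destruct (main_gt b c hb hc Hbc) as [l [Hl Hb]].
    unfold f_tm. rewrite (is_lim_seq_unique _ _ Hl).
    split; [exists l; auto|]. split; [intro; lra|]. split; [intros _; simpl; exact Hb|]. intro; lra.
Qed.
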